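(* For $I\subseteq\{0,\dots,n\}$ and $u,v\in U^I$, $$\mathrm{ord}_p\,\theta_{0,qu-v}(\hat\lambda)\ge\frac{pu_{n+1}-v_{n+1}}{p-1}+(a-1)(\mu_I+1).$$
   Context: $p$ prime, $a\ge1$, $q=p^a$, $n\ge1$, $d\ge2$; ${\bf a}_1,\dots,{\bf a}_N\in\mathbb{N}^{n+1}$ with coordinate sums $d$, ${\bf a}_j^+=({\bf a}_j,1)\in\mathbb{N}^{n+2}$. $\mu_I$ is defined by $\lceil|I|/d\rceil=\mu_I+1$; $U^I$ is the set of $u\in\mathbb{N}^{n+2}$ with $\sum_{i=0}^nu_i=du_{n+1}$ and $u_i>0$ for $i\in I$. $\mathrm{ord}_p$ is normalized by $\mathrm{ord}_p\,p=1$. $\gamma_0$ is a zero of $\sum_{i\ge0}t^{p^i}/p^i$ with $\mathrm{ord}_p\gamma_0=1/(p-1)$; $\theta(t)=\mathrm{AH}(\gamma_0t)$ with $\mathrm{AH}(t)=\exp(\sum_{i\ge0}t^{p^i}/p^i)$. For $\lambda\in\mathbb{F}_q^N$ with Teichmüller lifting $\hat\lambda$, set $\theta(\hat\lambda,x)=\prod_{j=1}^N\theta(\hat\lambda_jx^{{\bf a}_j^+})$ and $\theta_0(\hat\lambda,x)=\prod_{i=0}^{a-1}\theta(\hat\lambda^{p^i},x^{p^i})$ (powers componentwise), and write $\theta_0(\hat\lambda,x)=\sum_w\theta_{0,w}(\hat\lambda)x^w$ ($\theta_{0,w}=0$ if $x^w$ does not occur). *)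

(* Defs.v *)
From HB Require Import structures.
From mathcomp Require Import all_boot all_order all_algebra all_field.
From mathcomp Require Import mpoly.

Set Implicit Arguments.
Unset Strict Implicit.
Unset Printing Implicit Defensive.
Import Order.TTheory GRing.Theory Num.Theory.
Local Open Scope ring_scope.

(* ord 0 = +oo is encoded by [ord_ge] below.  Normalized: ord p = 1.   *)
Record is_pval (K : fieldType) (p : nat) (ord : K -> rat) : Prop := {
  pval_p_neq0 : (p%:R : K) != 0;
  pval_p : ord p%:R = 1;
  pval_M : forall x y, x != 0 -> y != 0 -> ord (x * y) = ord x + ord y;
  pval_D : forall x y, x != 0 -> y != 0 -> x + y != 0 ->
             Num.min (ord x) (ord y) <= ord (x + y)
}.

(* "ord_p x >= r", with the convention ord_p 0 = +oo *)
Definition ord_ge (K : fieldType) (ord : K -> rat) (x : K) (r : rat) : Prop :=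
  x = 0 \/ r <= ord x.

Definition integral (K : fieldType) (ord : K -> rat) (x : K) : Prop :=
  ord_ge ord x 0.

Definition is_zero_of_AHlog (K : fieldType) (ord : K -> rat) (p : nat)
  (g : K) : Prop :=
  forall B : rat, exists N0 : nat, forall M : nat, (N0 <= M)%N ->
    ord_ge ord (\sum_(i < M) g ^+ (p ^ i) / (p ^ i)%:R) B.

Record is_teichmuller (K : fieldType) (ord : K -> rat) (F : finFieldType)
  (red : K -> F) (tl : F -> K) : Prop := {
  red_D : forall x y, integral ord x -> integral ord y ->
            red (x + y) = red x + red y;
  red_M : forall x y, integral ord x -> integral ord y ->
            red (x * y) = red x * red y;
  red_1 : red 1 = 1;
  red_ker : forall x, integral ord x ->
              (red x = 0 <-> (x = 0 \/ 0 < ord x));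
  tl_integral : forall c, integral ord (tl c);
  tl_red : forall c, red (tl c) = c;
  tl_fix : forall c, tl c ^+ #|F| = tl c
}.

(* Coefficients of the Artin-Hasse series AH(t) = exp(sum_i t^{p^i}/p^i):
   the coefficient of t^m of the formal exponential, computed from the
   truncation (terms with p^i > m or k > m do not contribute). *)
Definition AHcoef (p m : nat) : rat :=
  let f : {poly rat} := \sum_(i < m.+1) ((p ^ i)%:R)^-1 *: 'X^(p ^ i) in
  (\sum_(k < m.+1) (k`!%:R)^-1 *: (f ^+ k))`_m.

(* theta(t) = AH(gamma0 t) = sum_m theta_coef m t^m *)
Definition theta_coef (K : fieldType) (p : nat) (g : K) (m : nat) : K :=
  ratr (AHcoef p m) * g ^+ m.

(* a_j^+ = (a_j, 1) in N^{n+2}; the last coordinate is ord_max *)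
Definition aplus (n N : nat) (A : 'I_N -> 'I_n.+1 -> nat) (j : 'I_N)
  (k : 'I_n.+2) : nat :=
  if unlift ord_max k is Some k' then A j k' else 1%N.

(* Truncation at t-degree D of
   theta_0(lam^, x) = prod_{i<a} prod_j theta(lam^_j^{p^i} x^{p^i a_j^+}),
   as a polynomial in x_0..x_{n+1}.  All monomials of degree > D in t
   have x_{n+1}-exponent > D. *)
Definition theta0_trunc (K : fieldType) (p a n N : nat) (g : K)
  (A : 'I_N -> 'I_n.+1 -> nat) (lamh : 'I_N -> K) (D : nat)
  : {mpoly K[n.+2]} :=
  \prod_(i < a) \prod_(j < N) \sum_(m < D.+1)
     (theta_coef p g m * lamh j ^+ (p ^ i * m)) *:
       'X_[ [multinom (p ^ i * m * aplus A j k)%N | k < n.+2] ].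

(* theta_{0,w}(lam^) for w in Z^{n+2} (0 if x^w does not occur). *)
Definition theta0_coef (K : fieldType) (p a n N : nat) (g : K)
  (A : 'I_N -> 'I_n.+1 -> nat) (lamh : 'I_N -> K) (w : 'I_n.+2 -> int) : K :=
  if [forall k, 0 <= w k]
  then (theta0_trunc p a g A lamh `|w ord_max|%N)@_[multinom `|w k|%N | k < n.+2]
  else 0.

(* mu_I defined by ceil(|I|/d) = mu_I + 1 *)
Definition muI (n d : nat) (I : {set 'I_n.+1}) : int :=
  ((#|I| + d.-1) %/ d)%N%:Z - 1.

Definition inU (n d : nat) (I : {set 'I_n.+1}) (u : 'I_n.+2 -> nat) : Prop :=
  (\sum_(i < n.+1) u (widen_ord (leqnSn _) i))%N = (d * u ord_max)%N /\
  (forall i : 'I_n.+1, i \in I -> (0 < u (widen_ord (leqnSn _) i))%N).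

(* Main.v *)
Require Import Defs.
From HB Require Import structures.
From mathcomp Require Import all_boot all_order all_algebra all_field.
From mathcomp Require Import mpoly.
From mathcomp Require Import ring lra zify.
Import Order.TTheory GRing.Theory Num.Theory.
Local Open Scope ring_scope.

Definition cong (n : nat) (a b : {poly rat}) := 'X^n %| (a - b).

Lemma cong_refl n a : cong n a a.
Proof. by rewrite /cong subrr dvdp0. Qed.
Lemma cong_sym n a b : cong n a b -> cong n b a.
Proof. by rewrite /cong => h; rewrite -opprB -mulN1r; apply: dvdp_mull. Qed.
Lemma cong_trans n a b c : cong n a b -> cong n b c -> cong n a c.
Proof. by rewrite /cong => h1 h2; rewrite -(subrKA b); apply: dvdp_add. Qed.
Lemma congD n a b c d : cong n a b -> cong n c d -> cong n (a + c) (b + d).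
Proof. by rewrite /cong => h1 h2; rewrite opprD addrACA; apply: dvdp_add. Qed.
Lemma congM n a b c d : cong n a b -> cong n c d -> cong n (a * c) (b * d).
Proof.
rewrite /cong => h1 h2.
have -> : a * c - b * d = (a - b) * c + b * (c - d) by ring.
by apply: dvdp_add; [apply: dvdp_mulr | apply: dvdp_mull].
Qed.
Lemma congZ n (k : rat) a b : cong n a b -> cong n (k *: a) (k *: b).
Proof. by rewrite /cong => h; rewrite -scalerBr -mul_polyC; apply: dvdp_mull. Qed.
Lemma congX n a b k : cong n a b -> cong n (a ^+ k) (b ^+ k).
Proof. by rewrite /cong => h; rewrite subrXX; apply: dvdp_mulr. Qed.
Lemma cong_sum n (I : Type) (r : seq I) (P : pred I) (F G : I -> {poly rat}) :
  (forall i, P i -> cong n (F i) (G i)) ->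
  cong n (\sum_(i <- r | P i) F i) (\sum_(i <- r | P i) G i).
Proof. by move=> h; apply: (big_ind2 (cong n)) => //; [apply: cong_refl|apply: congD]. Qed.
Lemma cong_dvd n a b : 'X^n %| a -> 'X^n %| b -> cong n a b.
Proof. by move=> ha hb; rewrite /cong; apply: dvdp_sub. Qed.
Lemma cong_le n m a b : (m <= n)%N -> cong n a b -> cong m a b.
Proof. by move=> hmn h; apply: dvdp_trans h; apply: dvdp_exp2l. Qed.

Lemma dvdXn_coef [n] [q : {poly rat}] [i] : 'X^n %| q -> (i < n)%N -> q`_i = 0.
Proof. by move=> /divpK <- hi; rewrite coefMXn hi. Qed.

Lemma coef_dvdXn n (q : {poly rat}) : (forall i, (i < n)%N -> q`_i = 0) -> 'X^n %| q.
Proof.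
move=> h; have -> : q = (\poly_(j < size q) q`_(j + n)) * 'X^n.
  apply/polyP => i; rewrite coefMXn coef_poly.
  case: ltnP => hi; first by rewrite h.
  case: ltnP => hs; first by rewrite subnK.
  by rewrite nth_default // (leq_trans hs) // leq_subr.
by apply: dvdp_mull.
Qed.

Lemma cong_coef n a b i : cong n a b -> (i < n)%N -> a`_i = b`_i.
Proof. by move=> h hi; apply/eqP; rewrite -subr_eq0 -coefB (dvdXn_coef h hi). Qed.

Lemma dvdX_exp [f : {poly rat}] k : 'X %| f -> 'X^k %| f ^+ k.
Proof. by move=> h; rewrite dvdp_exp2r. Qed.

Definition Ex (K : nat) (f : {poly rat}) : {poly rat} :=
  \sum_(k < K.+1) (k`!%:R)^-1 *: f ^+ k.

Lemma Ex_cong n K f g : cong n f g -> cong n (Ex K f) (Ex K g).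
Proof. by move=> h; apply: cong_sum => k _; apply/congZ/congX. Qed.

Lemma Ex0 K : Ex K 0 = 1.
Proof.
rewrite /Ex big_ord_recl /= expr0 invr1 scale1r big1 ?addr0 // => i _.
by rewrite expr0n /= scaler0.
Qed.

Lemma Ex_coef0 K [f : {poly rat}] : 'X %| f -> (Ex K f)`_0 = 1.
Proof.
move=> hf; rewrite /Ex coef_sum big_ord_recl /= expr0 invr1 scale1r coefC eqxx.
rewrite big1 ?addr0 // => i _; rewrite coefZ (dvdXn_coef (dvdX_exp (bump 0 i) hf)) ?mulr0 //.
Qed.

Lemma comp_polyXk (f q : {poly rat}) k : (f ^+ k) \Po q = (f \Po q) ^+ k.
Proof.
elim: k => [|k IH]; first by rewrite !expr0 comp_polyC.
by rewrite !exprS comp_polyM IH.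
Qed.

Lemma Ex_comp K f q : Ex K f \Po q = Ex K (f \Po q).
Proof.
rewrite /Ex; elim/big_rec2: _ => [|k y1 y2 _ <-]; first by rewrite comp_polyC.
by rewrite comp_polyD comp_polyZ comp_polyXk.
Qed.

Lemma sum_if_lt (V : nmodType) m N (H : nat -> V) : (m <= N)%N ->
  \sum_(0 <= i < m) H i = \sum_(0 <= i < N) (if (i < m)%N then H i else 0).
Proof.
move=> hm; rewrite (@big_cat_nat _ _ _ m 0 N) /=; last by []; last by [].
rewrite [X in _ = _ + X]big1_seq ?addr0; last first.
  by move=> i /andP [_]; rewrite mem_index_iota => /andP [hi _]; rewrite ltnNge hi.
by apply: eq_big_nat => i /andP [_ ->].
Qed.

Lemma sum_if_ge (V : nmodType) m N (H : nat -> V) : (m <= N)%N ->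
  \sum_(0 <= i < N) (if (m <= i)%N then H i else 0) = \sum_(0 <= j < N - m) H (j + m)%N.
Proof.
move=> hm; rewrite (@big_cat_nat _ _ _ m 0 N) /=; last by []; last by [].
rewrite big1_seq ?add0r; last first.
  by move=> i /andP [_]; rewrite mem_index_iota => /andP [_ hi]; rewrite leqNgt hi.
rewrite -{1}[m]add0n big_addn.
by apply: eq_big_nat => i _; rewrite leq_addl.
Qed.

Lemma tri_sum (V : nmodType) K (F : nat -> nat -> V) :
  \sum_(n < K.+1) \sum_(i < n.+1) F (n - i)%N i =
  \sum_(j < K.+1) \sum_(k < K.+1) (if (j + k <= K)%N then F j k else 0).
Proof.
rewrite -(big_mkord xpredT (fun n => \sum_(i < n.+1) F (n - i)%N i)).
rewrite -(big_mkord xpredT (fun j => \sum_(k < K.+1) (if (j + k <= K)%N then F j k else 0))).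
under eq_big_nat => n _ do rewrite -(big_mkord xpredT (fun i => F (n - i)%N i)).
under [RHS]eq_big_nat => j _ do rewrite -(big_mkord xpredT (fun k => (if (j + k <= K)%N then F j k else 0))).
rewrite [LHS](@eq_big_nat _ _ _ 0 K.+1 _
   (fun n => \sum_(0 <= i < K.+1) (if (i < n.+1)%N then F (n - i)%N i else 0))); last first.
  by move=> n /andP [_ hn]; apply: sum_if_lt.
rewrite exchange_big_nat [RHS]exchange_big_nat.
apply: eq_big_nat => k /andP [_ hk].
transitivity (\sum_(0 <= j < K.+1 - k) F j k).
  have -> : \sum_(0 <= j < K.+1 - k) F j k =
     \sum_(0 <= j < K.+1 - k) (fun n => F (n - k)%N k) (j + k)%N.
    by apply: eq_big_nat => j _; rewrite /= addnK.
  rewrite -(@sum_if_ge _ k K.+1 (fun n => F (n - k)%N k)); last exact: ltnW.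
  by apply: eq_big_nat => n _; rewrite ltnS.
rewrite (@sum_if_lt _ (K.+1 - k) K.+1 (fun j => F j k)); last exact: leq_subr.
apply: eq_big_nat => j _.
have -> : (j < K.+1 - k)%N = (j + k <= K)%N.
  by rewrite ltn_subRL addnC ltnS.
by [].
Qed.

Lemma fact_neq0 n : (n`!%:R : rat) != 0.
Proof. by rewrite pnatr_eq0 -lt0n fact_gt0. Qed.

Lemma dvdp_sum (d : {poly rat}) (I : Type) (r : seq I) (P : pred I) (F : I -> {poly rat}) :
  (forall i, P i -> d %| F i) -> d %| \sum_(i <- r | P i) F i.
Proof. move=> h; apply: (big_ind (fun x => d %| x)) => //; by move=> x y; apply: dvdp_add. Qed.

Lemma Ex_add K f g : 'X %| f -> 'X %| g -> cong K.+1 (Ex K (f + g)) (Ex K f * Ex K g).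
Proof.
move=> hf hg.
pose F := fun j k => ((j`!%:R)^-1 * (k`!%:R)^-1 : rat) *: (f ^+ j * g ^+ k).
have e1 : Ex K f * Ex K g = \sum_(j < K.+1) \sum_(k < K.+1) F j k.
  rewrite /Ex mulr_suml; apply: eq_bigr => j _; rewrite mulr_sumr; apply: eq_bigr => k _.
  by rewrite /F -scalerAl -scalerAr scalerA.
have e2 : Ex K (f + g) = \sum_(n < K.+1) \sum_(i < n.+1) F (n - i)%N i.
  rewrite /Ex; apply: eq_bigr => n _; rewrite exprDn scaler_sumr; apply: eq_bigr => i _.
  rewrite /F -scaler_nat scalerA; congr (_ *: _).
  have hi : (i <= n)%N by rewrite -ltnS.
  have := bin_fact hi; move/(congr1 (fun x => x%:R : rat)); rewrite !natrM => <-.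
  have hC : ('C(n, i)%:R : rat) != 0 by rewrite pnatr_eq0 -lt0n bin_gt0.
  have h1 := fact_neq0 i; have h2 := fact_neq0 (n - i).
  field. by rewrite hC h1 h2.
rewrite e1 e2 tri_sum /cong -sumrB.
apply: dvdp_sum => j _; rewrite -sumrB; apply: dvdp_sum => k _.
case: ifP => hjk; first by rewrite subrr dvdp0.
rewrite sub0r -mulN1r; apply: dvdp_mull.
rewrite /F -mul_polyC; apply: dvdp_mull.
apply: (@dvdp_trans _ ('X^(j + k))); first by apply: dvdp_exp2l; rewrite ltnNge hjk.
by rewrite exprD; apply: dvdp_mul; apply: dvdX_exp.
Qed.

Lemma dvdX_mulrn n (f : {poly rat}) : 'X %| f -> 'X %| f *+ n.
Proof. by move=> h; rewrite -mulr_natr; apply: dvdp_mulr. Qed.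

Lemma Ex_nat K f n : 'X %| f -> cong K.+1 (Ex K (f *+ n)) (Ex K f ^+ n).
Proof.
move=> hf; elim: n => [|n IH]; first by rewrite mulr0n expr0 Ex0; apply: cong_refl.
rewrite mulrS exprS; apply: cong_trans; first exact: (@Ex_add K f (f *+ n) hf (dvdX_mulrn n f hf)).
by apply: congM => //; apply: cong_refl.
Qed.
Section PInt.
Variable p : nat.
Hypothesis hp : prime p.

Definition pint (r : rat) := exists a : int, exists b : nat, ~~ (p %| b)%N /\ r = a%:~R / b%:R.

Lemma p_gt1 : (1 < p)%N. Proof. exact: prime_gt1. Qed.

Lemma ndvd_neq0 [b] : ~~ (p %| b)%N -> (b%:R : rat) != 0.
Proof. by case: b => [|b]; [rewrite dvdn0|rewrite pnatr_eq0]. Qed.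

Lemma pint_int (z : int) : pint z%:~R.
Proof. exists z, 1%N; split; last by rewrite divr1.
by rewrite dvdn1; have := p_gt1; case: p => [|[]]. Qed.

Lemma pint_nat (n : nat) : pint n%:R.
Proof. by have := pint_int n; rewrite pmulrn. Qed.

Lemma pint0 : pint 0. Proof. exact: (pint_nat 0). Qed.
Lemma pint1 : pint 1. Proof. exact: (pint_nat 1). Qed.

Lemma pintD x y : pint x -> pint y -> pint (x + y).
Proof.
move=> [a [b [hb ->]]] [c [d [hd ->]]].
exists (a * d%:Z + c * b%:Z), (b * d)%N; split.
  by rewrite Euclid_dvdM // negb_or hb hd.
have hb0 := ndvd_neq0 hb; have hd0 := ndvd_neq0 hd.
rewrite natrM intrD !intrM. rewrite -!pmulrn. field. by rewrite hb0 hd0.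
Qed.

Lemma pintM x y : pint x -> pint y -> pint (x * y).
Proof.
move=> [a [b [hb ->]]] [c [d [hd ->]]].
exists (a * c), (b * d)%N; split.
  by rewrite Euclid_dvdM // negb_or hb hd.
have hb0 := ndvd_neq0 hb; have hd0 := ndvd_neq0 hd.
rewrite natrM intrM. field. by rewrite hb0 hd0.
Qed.

Lemma pintN x : pint x -> pint (- x).
Proof. move=> [a [b [hb ->]]]; exists (- a), b; split => //.
by rewrite intrN mulNr. Qed.

Lemma pintB x y : pint x -> pint y -> pint (x - y).
Proof. by move=> hx hy; apply: pintD => //; apply: pintN. Qed.

Lemma pintX x n : pint x -> pint (x ^+ n).
Proof. by move=> hx; elim: n => [|n IH]; [rewrite expr0; apply: pint1|rewrite exprS; apply: pintM]. Qed.

Lemma pint_sum (I : Type) (r : seq I) (P : pred I) (F : I -> rat) :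
  (forall i, P i -> pint (F i)) -> pint (\sum_(i <- r | P i) F i).
Proof. by move=> h; apply: big_ind => //; [apply: pint0|apply: pintD]. Qed.

Lemma pint_ndvd [b : nat] : ~~ (p %| b)%N -> pint (b%:R)^-1.
Proof. by move=> hb; exists 1, b; split => //; rewrite mul1r. Qed.

Lemma pint_pdiv_pM x : pint x -> pint (p%:R * x / p%:R).
Proof. move=> hx; rewrite mulrC mulrA mulVf ?mul1r //.
by rewrite pnatr_eq0; have := p_gt1; case: (p). Qed.

Lemma Fermat_int (a : int) : (p %| a ^+ p - a)%Z.
Proof.
have hc : p \in [pchar 'F_p] by apply: pchar_Fp.
rewrite (dvdz_pcharf hc) rmorphB rmorphXn /=.
have := @expf_card ('F_p) (a%:~R); rewrite card_Fp // => ->.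
by rewrite subrr.
Qed.

Lemma pint_Fermat x : pint x -> pint ((x ^+ p - x) / p%:R).
Proof.
move=> [a [b [hb ->]]].
have hc : p \in [pchar 'F_p] by apply: pchar_Fp.
have hk : (p %| a ^+ p - a * (b ^ p.-1)%N%:Z)%Z.
  rewrite (dvdz_pcharf hc) rmorphB rmorphM rmorphXn /=.
  have := @expf_card ('F_p) (a%:~R); rewrite card_Fp // => ->.
  have hb' : (b%:R : 'F_p) != 0 by rewrite -(dvdn_pcharf hc).
  have := @expf_card ('F_p) (b%:R); rewrite card_Fp // => e.
  have : (b%:R : 'F_p) ^+ p.-1 = 1.
    apply: (mulfI hb'); rewrite -exprS prednK ?prime_gt0 // e mulr1 //.
  by move=> h1; rewrite -pmulrn natrX h1 mulr1 subrr.
case/dvdzP: hk => k hk.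
have hb0 := ndvd_neq0 hb.
have hp0 : (p%:R : rat) != 0 by rewrite pnatr_eq0; have := p_gt1; case: (p).
exists k, (b ^ p)%N; split.
  by rewrite Euclid_dvdX // negb_and hb.
rewrite natrX.
have -> : (a%:~R / b%:R) ^+ p - a%:~R / b%:R = ((a ^+ p - a * (b ^ p.-1)%N%:Z)%:~R / (b%:R ^+ p) : rat).
  rewrite rmorphB rmorphM /= rmorphXn /= -pmulrn natrX expr_div_n.
  have -> : (b%:R : rat) ^+ p = b%:R * b%:R ^+ p.-1 by rewrite -exprS prednK ?prime_gt0.
  have hB : (b%:R : rat) ^+ p.-1 != 0 by rewrite expf_neq0.
  field. by rewrite hb0 hB.
rewrite hk intrM /= -pmulrn. have hB : (b%:R : rat) ^+ p != 0 by rewrite expf_neq0.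
field. by rewrite hB hp0.
Qed.

Definition pintp (P : {poly rat}) := forall i, pint P`_i.
Definition pdivp (P : {poly rat}) := pintp ((p%:R)^-1 *: P).

Lemma hp0 : (p%:R : rat) != 0.
Proof. by rewrite pnatr_eq0; have := p_gt1; case: (p). Qed.

Lemma pintp0 : pintp 0. Proof. by move=> i; rewrite coef0; apply: pint0. Qed.
Lemma pintpC c : pint c -> pintp c%:P.
Proof. by move=> hc i; rewrite coefC; case: (i == 0)%N => //; apply: pint0. Qed.
Lemma pintp1 : pintp 1. Proof. by rewrite -polyC1; apply/pintpC/pint1. Qed.
Lemma pintpX : pintp 'X.
Proof. by move=> i; rewrite coefX; apply: pint_nat. Qed.
Lemma pintpXn n : pintp 'X^n.
Proof. by move=> i; rewrite coefXn; apply: pint_nat. Qed.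
Lemma pintpD P Q : pintp P -> pintp Q -> pintp (P + Q).
Proof. by move=> hP hQ i; rewrite coefD; apply: pintD. Qed.
Lemma pintpN P : pintp P -> pintp (- P).
Proof. by move=> hP i; rewrite coefN; apply: pintN. Qed.
Lemma pintpB P Q : pintp P -> pintp Q -> pintp (P - Q).
Proof. by move=> hP hQ; apply/pintpD/pintpN. Qed.
Lemma pintpM P Q : pintp P -> pintp Q -> pintp (P * Q).
Proof. move=> hP hQ i; rewrite coefM; apply: pint_sum => j _; exact: pintM. Qed.
Lemma pintpZ c P : pint c -> pintp P -> pintp (c *: P).
Proof. by move=> hc hP i; rewrite coefZ; apply: pintM. Qed.
Lemma pintpMn P n : pintp P -> pintp (P *+ n).
Proof. by move=> hP i; rewrite coefMn -mulr_natr; apply: pintM => //; apply: pint_nat. Qed.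
Lemma pintpX' P n : pintp P -> pintp (P ^+ n).
Proof. by move=> hP; elim: n => [|n IH]; [rewrite expr0; apply: pintp1|rewrite exprS; apply: pintpM]. Qed.
Lemma pintp_sum (I : Type) (r : seq I) (Pr : pred I) (F : I -> {poly rat}) :
  (forall i, Pr i -> pintp (F i)) -> pintp (\sum_(i <- r | Pr i) F i).
Proof. by move=> h; apply: big_ind => //; [apply: pintp0|apply: pintpD]. Qed.
Lemma pintp_comp P n : (0 < n)%N -> pintp P -> pintp (P \Po 'X^n).
Proof. by move=> hn hP i; rewrite coef_comp_poly_Xn //; case: ifP => _ //; apply: pint0. Qed.

Lemma pdivp_pintp P : pdivp P -> pintp P.
Proof. move=> h; have -> : P = p%:R *: ((p%:R)^-1 *: P) by rewrite scalerA mulfV ?hp0 ?scale1r.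
by apply: pintpZ => //; apply: pint_nat. Qed.
Lemma pdivpD P Q : pdivp P -> pdivp Q -> pdivp (P + Q).
Proof. by move=> hP hQ; rewrite /pdivp scalerDr; apply: pintpD. Qed.
Lemma pdivpN P : pdivp P -> pdivp (- P).
Proof. by move=> hP; rewrite /pdivp scalerN; apply: pintpN. Qed.
Lemma pdivpB P Q : pdivp P -> pdivp Q -> pdivp (P - Q).
Proof. by move=> hP hQ; apply/pdivpD/pdivpN. Qed.
Lemma pdivpMr P Q : pdivp P -> pintp Q -> pdivp (P * Q).
Proof. by move=> hP hQ; rewrite /pdivp scalerAl; apply: pintpM. Qed.
Lemma pdivpMl P Q : pintp P -> pdivp Q -> pdivp (P * Q).
Proof. by move=> hP hQ; rewrite mulrC; apply: pdivpMr. Qed.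
Lemma pdivp_p P : pintp P -> pdivp (p%:R *: P).
Proof. by move=> hP; rewrite /pdivp scalerA mulVf ?hp0 ?scale1r. Qed.
Lemma pdivp0 : pdivp 0. Proof. by rewrite /pdivp scaler0; apply: pintp0. Qed.
Lemma pdivp_sum (I : Type) (r : seq I) (Pr : pred I) (F : I -> {poly rat}) :
  (forall i, Pr i -> pdivp (F i)) -> pdivp (\sum_(i <- r | Pr i) F i).
Proof. by move=> h; apply: big_ind => //; [apply: pdivp0|apply: pdivpD]. Qed.

Lemma binom_mid (R : comPzRingType) (x y : R) n :
  (x + y) ^+ n.+1 - x ^+ n.+1 - y ^+ n.+1 =
  \sum_(i < n) x ^+ (n.+1 - i.+1) * y ^+ i.+1 *+ 'C(n.+1, i.+1).
Proof.
rewrite exprDn big_ord_recr /= big_ord_recl /= subnn subn0 !bin0 binn !expr0 mulr1 mul1r !mulr1n.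
have e : forall a b c : R, a + b + c - a - c = b by move=> a b c; rewrite addrAC addrK addrAC subrr add0r.
exact: e.
Qed.

Lemma pdivp_binom A B : pintp A -> pintp B -> pdivp ((A + B) ^+ p - A ^+ p - B ^+ p).
Proof.
move=> hA hB; rewrite -(prednK (prime_gt0 hp)) binom_mid prednK ?prime_gt0 //.
apply: pdivp_sum => i _.
have hi : (0 < i.+1 < p)%N.
  by have := ltn_ord i; have := prime_gt0 hp; lia.
case/dvdnP: (prime_dvd_bin hp hi) => k ->.
rewrite mulnC mulrnA mulrnAC -scaler_nat; apply: pdivp_p; apply: pintpMn.
by apply: pintpM; apply: pintpX'.
Qed.

Lemma pdivp_frob P : pintp P -> pdivp (P ^+ p - (P \Po 'X^p)).
Proof.
elim/poly_ind: P => [_|Q c IH hP].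
  by rewrite expr0n gtn_eqF ?prime_gt0 // comp_poly0 subrr; apply: pdivp0.
have hc : pint c by have := hP 0%N; rewrite coefD coefMX coefC eqxx add0r.
have hQ : pintp Q by move=> i; have := hP i.+1; rewrite coefD coefMX coefC /= addr0.
rewrite comp_poly_MXaddC.
have -> : (Q * 'X + c%:P) ^+ p - ((Q \Po 'X^p) * 'X^p + c%:P) =
   ((Q * 'X + c%:P) ^+ p - (Q*'X) ^+ p - c%:P ^+ p) + (Q ^+ p - (Q \Po 'X^p)) * 'X^p
   + (c ^+ p - c)%:P.
  rewrite exprMn polyCB rmorphXn /=. ring.
apply: pdivpD; first apply: pdivpD.
- by apply: pdivp_binom; [apply: pintpM => //; apply: pintpX | apply: pintpC].
- by apply: pdivpMr; [apply: IH | apply: pintpXn].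
- rewrite /pdivp -mul_polyC -polyCM; apply: pintpC; rewrite mulrC.
  exact: pint_Fermat.
Qed.

Lemma coef0X (q : {poly rat}) n : (q ^+ n)`_0 = q`_0 ^+ n.
Proof. by elim: n => [|n IH]; rewrite ?expr0 ?coefC // !exprS coef0M IH. Qed.

Lemma sum_div_le J n : (\sum_(1 <= k < J.+1) n %/ p ^ k <= n.-1)%N.
Proof.
elim: J n => [|J IH] n; first by rewrite big_geq.
rewrite big_ltn // expn1.
have -> : (\sum_(2 <= k < J.+2) n %/ p ^ k = \sum_(1 <= k < J.+1) (n %/ p) %/ p ^ k)%N.
  rewrite -[2%N]/(1 + 1)%N big_addn subn1 /=.
  by apply: eq_big_nat => k _; rewrite addn1 expnS divnMA.
have := IH (n %/ p)%N; have := leq_divM n p; have := p_gt1.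
set q := (n %/ p)%N; move=> h1 h2 h3.
have : (2 * q <= q * p)%N by rewrite mulnC leq_mul2l h1 orbT.
lia.
Qed.

Lemma logn_fact_lt n : (0 < n)%N -> (logn p n`! < n)%N.
Proof.
move=> hn; rewrite logn_fact //; apply: (leq_ltn_trans (sum_div_le n n)).
by rewrite prednK.
Qed.

Lemma pint_pfact k : pint ((p ^ k)%:R / (k.+1)`!%:R).
Proof.
have [b hb e] := pfactor_coprime hp (fact_gt0 k.+1).
set l := logn p (k.+1)`! in e.
have hl : (l <= k)%N by rewrite -ltnS logn_fact_lt.
exists (p ^ (k - l))%N%:Z, b; split; first by rewrite -prime_coprime.
rewrite e natrM -pmulrn.
have hb0 : (b%:R : rat) != 0.
  by rewrite pnatr_eq0 -lt0n; move: (fact_gt0 k.+1); rewrite e muln_gt0 => /andP[].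
have hpl : ((p ^ l)%:R : rat) != 0 by rewrite natrX expf_neq0 // hp0.
rewrite -(subnK hl) expnD natrM natrX -natrX.
rewrite addnK. field. by rewrite hb0 hpl.
Qed.

Definition Lp (M : nat) : {poly rat} := \sum_(i < M.+1) ((p ^ i)%:R)^-1 *: 'X^(p ^ i).

Lemma X_dvd_Xn n : (0 < n)%N -> ('X : {poly rat}) %| 'X^n.
Proof. by move=> hn; rewrite -{1}(expr1 'X); apply: dvdp_exp2l. Qed.

Lemma X_dvd_Lp M : 'X %| Lp M.
Proof.
apply: dvdp_sum => i _; rewrite -mul_polyC; apply: dvdp_mull.
by apply: X_dvd_Xn; rewrite expn_gt0 prime_gt0.
Qed.

Lemma Lp_comp M : Lp M \Po 'X^p = p%:R *: (Lp M.+1 - 'X).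
Proof.
rewrite /Lp [in RHS]big_ord_recl /= expn0 mulr1n invr1 scale1r expr1 (addrC 'X) addrK.
rewrite scaler_sumr.
rewrite (big_morph (comp_poly 'X^p) (fun x y => comp_polyD x y 'X^p) (comp_poly0 _)).
apply: eq_bigr => i _.
rewrite comp_polyZ comp_Xn_poly -exprM scalerA /bump /= add1n expnS.
congr (_ *: _); rewrite natrM invfM mulrA mulfV ?mul1r //; exact: hp0.
Qed.

Lemma Lp_cong M : cong M.+1 (Lp M.+1) (Lp M).
Proof.
rewrite /cong /Lp big_ord_recr /= addrC addrK -mul_polyC; apply: dvdp_mull.
by apply: dvdp_exp2l; apply: ltnW; apply: ltn_expl; apply: p_gt1.
Qed.

Definition Eneg (M : nat) : {poly rat} := Ex M (- (p%:R *: 'X)).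

Lemma AH_func M : cong M.+1 (Ex M (Lp M) \Po 'X^p) (Ex M (Lp M) ^+ p * Eneg M).
Proof.
have hX1 : 'X %| - (p%:R *: ('X : {poly rat})).
  by rewrite -scaleNr -mul_polyC; apply: dvdp_mull.
rewrite Ex_comp Lp_comp.
apply: (@cong_trans _ _ (Ex M (p%:R *: (Lp M - 'X)))).
  apply: Ex_cong; apply: congZ; apply: congD; [apply: Lp_cong | apply: cong_refl].
have -> : p%:R *: (Lp M - 'X) = Lp M *+ p + - (p%:R *: 'X) by rewrite scalerBr -scaler_nat.
apply: cong_trans; first by apply: Ex_add => //; apply: dvdX_mulrn; apply: X_dvd_Lp.
by apply: congM; [apply: Ex_nat; apply: X_dvd_Lp | apply: cong_refl].
Qed.

Lemma Eneg_coef0 M : (Eneg M)`_0 = 1.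
Proof. by apply: Ex_coef0; rewrite -scaleNr -mul_polyC; apply: dvdp_mull. Qed.

Lemma Eneg_pdiv M : pdivp (Eneg M - 1).
Proof.
rewrite /Eneg /Ex big_ord_recl /= expr0 invr1 scale1r addrC addKr.
apply: pdivp_sum => i _.
rewrite -scaleNr exprZn scalerA /bump /= add1n.
have -> : ((i.+1)`!%:R)^-1 * (- p%:R) ^+ i.+1 = p%:R * ((-1) ^+ i.+1 * ((p ^ i)%:R / (i.+1)`!%:R)) :> rat.
  rewrite -mulN1r exprMn [(p%:R : rat) ^+ i.+1]exprS natrX. have := fact_neq0 i.+1.
  set a := ((-1) ^+ i.+1 : rat); set b := ((p%:R : rat) ^+ i); set c := ((i.+1)`!%:R : rat).
  move=> h. field. done.
rewrite -scalerA; apply: pdivp_p; apply: pintpZ; last by apply: pintpXn.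
by apply: pintM; [apply: pintX; apply: pintN; apply: pint1 | apply: pint_pfact].
Qed.

Lemma AH_int M m : (m <= M)%N -> pint (Ex M (Lp M))`_m.
Proof.
set A := Ex M (Lp M).
have hA0 : A`_0 = 1 := Ex_coef0 M (X_dvd_Lp M).
elim/ltn_ind: m => m IH hm.
case: m IH hm => [|m] IH hm; first by rewrite hA0; apply: pint1.
pose P := \poly_(j < m.+1) A`_j.
have hP : pintp P.
  move=> j; rewrite coef_poly; case: ifP => hj; last by apply: pint0.
  by apply: IH => //; apply: leq_trans hm; apply: ltnW.
have hP0 : P`_0 = 1 by rewrite coef_poly /= hA0.
have hAP : 'X^(m.+1) %| (A - P).
  apply: coef_dvdXn => i hi; by rewrite coefB coef_poly hi subrr.
pose R := (A - P) %/ 'X^(m.+1).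
have eR : A - P = R * 'X^(m.+1) by rewrite divpK.
have hR0 : R`_0 = A`_m.+1.
  have := congr1 (fun q : {poly rat} => q`_m.+1) eR; rewrite /= coefMXn ltnn subnn coefB coef_poly ltnn subr0.
  by move=> ->.
pose S := \sum_(i < p) A ^+ (p.-1 - i) * P ^+ i.
have eS : A ^+ p - P ^+ p = (A - P) * S by rewrite subrXX.
have hS0 : S`_0 = p%:R.
  rewrite /S coef_sum (eq_bigr (fun _ => 1)); first by rewrite sumr_const card_ord.
  by move=> i _; rewrite coef0M !coef0X hA0 hP0 !expr1n mulr1.
pose G := Eneg M - 1.
have hG : pdivp G by apply: Eneg_pdiv.
have hG0 : G`_0 = 0 by rewrite coefB Eneg_coef0 coefC subrr.
have key := @cong_coef _ _ _ m.+1 (AH_func M) hm.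
rewrite -/A coef_comp_poly_Xn ?prime_gt0 // in key.
have eE : Eneg M = 1 + G by rewrite /G addrC subrK.
have eAp : A ^+ p = P ^+ p + R * S * 'X^(m.+1).
  by rewrite -[LHS](subrK (P ^+ p)) eS eR addrC mulrAC.
rewrite eE mulrDr mulr1 eAp mulrDl coefD coefD coefMXn ltnn subnn in key.
rewrite (_ : R * S * 'X^(m.+1) * G = R * S * G * 'X^(m.+1)) ?coefMXn ?ltnn ?subnn in key; last by rewrite mulrAC.
rewrite coefD coefMXn ltnn subnn !coef0M hG0 mulr0 addr0 hR0 hS0 in key.
have eC : (if (p %| m.+1)%N then A`_(m.+1 %/ p) else 0) = (P \Po 'X^p)`_m.+1.
  rewrite coef_comp_poly_Xn ?prime_gt0 //; case: ifP => // _.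
  by rewrite coef_poly ltn_Pdiv ?p_gt1.
rewrite eC in key.
have -> : A`_m.+1 = - ((p%:R)^-1 * (P ^+ p - (P \Po 'X^p))`_m.+1) - (p%:R)^-1 * (P ^+ p * G)`_m.+1.
  rewrite coefB key. have := hp0. set x := (P ^+ p)`_m.+1. set y := (P ^+ p * G)`_m.+1.
  move=> h. field. done.
apply: pintB; first apply: pintN.
  by have := @pdivp_frob P hP m.+1; rewrite coefZ.
by have := @pdivpMl _ _ (@pintpX' _ p hP) hG m.+1; rewrite coefZ.
Qed.

Lemma AHcoef_pint m : pint (AHcoef p m).
Proof. exact: (@AH_int m m (leqnn m)). Qed.

End PInt.

Lemma aplus_last (n N : nat) (A : 'I_N -> 'I_n.+1 -> nat) j : aplus A j ord_max = 1%N.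
Proof. by rewrite /aplus unlift_none. Qed.

Lemma aplus_widen (n N : nat) (A : 'I_N -> 'I_n.+1 -> nat) j (k : 'I_n.+1) :
  aplus A j (widen_ord (leqnSn _) k) = A j k.
Proof.
have -> : widen_ord (leqnSn _) k = lift ord_max k by apply: val_inj; rewrite /= /bump leqNgt ltn_ord.
by rewrite /aplus liftK.
Qed.

Section Comb.
Variables (p a n d N : nat).
Hypotheses (hp : prime p) (ha : (0 < a)%N) (hd : (0 < d)%N).
Variable A : 'I_N -> 'I_n.+1 -> nat.
Hypothesis hA : forall j, (\sum_(i < n.+1) A j i)%N = d.
Variable I : {set 'I_n.+1}.
Variables u v : 'I_n.+2 -> nat.
Hypotheses (hu : inU d I u) (hv : inU d I v).
Variable m : nat -> 'I_N -> nat.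
Hypothesis heq : forall k : 'I_n.+2,
  (\sum_(0 <= i < a) \sum_(j < N) p ^ i * m i j * aplus A j k)%N = (p ^ a * u k - v k)%N.
Hypothesis hvu : forall k, (v k <= p ^ a * u k)%N.

Let T i k := (\sum_(j < N) m i j * aplus A j k)%N.
Let S l k := (\sum_(0 <= i < l) p ^ i * T i k)%N.
Let C := ((#|I| + d.-1) %/ d)%N.

Lemma S_full k : (S a k + v k)%N = (p ^ a * u k)%N.
Proof.
rewrite /S /T -(subnK (hvu k)) -heq; congr (_ + _)%N.
by apply: eq_bigr => i _; rewrite big_distrr /=; apply: eq_bigr => j _; rewrite mulnA.
Qed.

Lemma S_dvd l k : (l <= a)%N -> (p ^ l %| S l k + v k)%N.
Proof.
move=> hl.
have e : (S a k = S l k + \sum_(l <= i < a) p ^ i * T i k)%N.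
  by rewrite /S (@big_cat_nat _ _ _ l 0 a).
have h1 : (p ^ l %| \sum_(l <= i < a) p ^ i * T i k)%N.
  rewrite big_nat_cond; apply: dvdn_sum => i /andP [/andP [hi _] _].
  by apply: dvdn_mulr; apply: dvdn_exp2l.
have h2 : (p ^ l %| S a k + v k)%N by rewrite S_full; apply: dvdn_mulr; apply: dvdn_exp2l.
by rewrite e addnAC dvdn_addl in h2.
Qed.

Lemma T_last i : T i ord_max = (\sum_(j < N) m i j)%N.
Proof. by apply: eq_bigr => j _; rewrite aplus_last muln1. Qed.

Lemma S_sumk l : (\sum_(k < n.+1) S l (widen_ord (leqnSn _) k))%N = (d * S l ord_max)%N.
Proof.
rewrite /S exchange_big big_distrr /=; apply: eq_bigr => i _.
rewrite -big_distrr /= mulnCA; congr (_ * _)%N.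
rewrite T_last /T exchange_big big_distrr /=; apply: eq_bigr => j _.
under eq_bigr => k _ do rewrite aplus_widen.
by rewrite -big_distrr /= hA mulnC.
Qed.

Lemma S_lower l : (l <= a)%N -> (p ^ l * C <= S l ord_max + v ord_max)%N.
Proof.
move=> hl.
have hpl : (0 < p ^ l)%N by rewrite expn_gt0 prime_gt0.
have e1 : (d * (S l ord_max + v ord_max) =
   \sum_(k < n.+1) (S l (widen_ord (leqnSn _) k) + v (widen_ord (leqnSn _) k)))%N.
  by rewrite big_split /= S_sumk hv.1 mulnDr.
have e2 : (#|I| * p ^ l <= d * (S l ord_max + v ord_max))%N.
  rewrite e1 (bigID (mem I)) /= -sum_nat_const.
  apply: leq_trans (leq_addr _ _); apply: leq_sum => k hk.
  apply: dvdn_leq; last by apply: S_dvd.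
  by rewrite addn_gt0 (hv.2 _ hk) orbT.
have [c hc] := dvdnP (S_dvd l ord_max hl).
rewrite hc in e2 *.
rewrite mulnA leq_pmul2r // in e2.
rewrite mulnC leq_pmul2r //.
rewrite /C -ltnS ltn_divLR //.
move: e2 hd; rewrite mulnC; lia.
Qed.


Let Wl i := (\sum_(j < N) m i j)%N.

Lemma eP1 : ((p.-1)%:R : rat) = p%:R - 1.
Proof. by rewrite -subn1 natrB ?prime_gt0. Qed.

Lemma ind_bound k : (k.+1 <= a)%N ->
  (S k.+1 ord_max + v ord_max)%:R / (p ^ k)%:R - (v ord_max)%:R + (p.-1)%:R * k%:R * C%:R
   <= ((\sum_(0 <= i < k.+1) Wl i)%N%:R : rat).
Proof.
elim: k => [|k IH] hk.
  rewrite big_nat1 /S big_nat1 T_last expn0 mul1n divr1 mulr0 mul0r addr0 natrD addrK.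
  by [].
have IH' := IH (ltnW hk).
have eS : S k.+2 ord_max = (S k.+1 ord_max + p ^ k.+1 * Wl k.+1)%N.
  by rewrite /S big_nat_recr //= T_last.
have hX := S_lower k.+1 (ltnW hk).
rewrite eS addnAC big_nat_recr //= natrD [X in _ <= X]natrD natrM !natrX eP1.
move: IH' hX.
rewrite natrX eP1.
set s := ((\sum_(0 <= i < k.+1) Wl i)%N%:R : rat).
set x := ((S k.+1 ord_max + v ord_max)%N%:R : rat).
set w := ((Wl k.+1)%:R : rat).
set vv := ((v ord_max)%:R : rat).
set c := (C%:R : rat).
set P := (p%:R : rat).
move=> IH' hX.
have hP : 1 < P by rewrite ltr1n prime_gt1.
have hq : 0 < P ^+ k by rewrite exprn_gt0 // (lt_trans ltr01 hP).
have hPq : 0 < P * P ^+ k by rewrite mulr_gt0 // (lt_trans ltr01 hP).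
have hP0 : P != 0 by rewrite gt_eqF // (lt_trans ltr01 hP).
have hq0 : P ^+ k != 0 by rewrite gt_eqF.
have ey1 : (x + P ^+ k.+1 * w) / P ^+ k.+1 = x / (P * P ^+ k) + w.
  rewrite exprS; field. by rewrite ?hP0 ?hq0.
have ey2 : x / P ^+ k = P * (x / (P * P ^+ k)).
  field. by rewrite ?hP0 ?hq0.
rewrite ey1 -natrD.
rewrite ey2 in IH'.
have hy : c <= x / (P * P ^+ k).
  rewrite ler_pdivlMr //.
  have := hX; rewrite -(ler_nat rat) natrM natrX exprS -/P -/c => h.
  by rewrite mulrC.
set y := x / (P * P ^+ k) in hy IH' *.
have hpos : 0 <= (P - 1) * (y - c) by rewrite mulr_ge0 // subr_ge0 // ltW.
rewrite -[(k.+1)%:R]natr1.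
nra.
Qed.

Lemma comb_final :
  ((((p * u ord_max)%N)%:~R - (v ord_max)%:~R) / (p.-1)%:R + (a.-1)%:R * (muI d I + 1)%:~R : rat)
   <= ((\sum_(0 <= i < a) Wl i)%N%:R : rat) / (p.-1)%:R.
Proof.
have hk : (a.-1.+1 <= a)%N by rewrite prednK.
have hb := ind_bound a.-1 hk.
rewrite prednK // S_full in hb.
have eC : (muI d I + 1)%:~R = (C%:R : rat) by rewrite /muI subrK -pmulrn.
rewrite eC -!pmulrn.
have hP : 1 < (p%:R : rat) by rewrite ltr1n prime_gt1.
have hP1 : (p.-1)%:R != 0 :> rat by rewrite eP1 subr_eq0 gt_eqF.
have hq0 : ((p ^ a.-1)%:R : rat) != 0 by rewrite pnatr_eq0 -lt0n expn_gt0 prime_gt0.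
have e1 : ((p ^ a * u ord_max)%N%:R / (p ^ a.-1)%:R : rat) = (p * u ord_max)%N%:R.
  rewrite -{1}(prednK ha) expnS natrM natrM natrM. field. by [].
rewrite e1 in hb.
set s := ((\sum_(0 <= i < a) Wl i)%N%:R : rat) in hb *.
set P1 := ((p.-1)%:R : rat) in hP1 hb *.
have -> : (((p * u ord_max)%N%:R - (v ord_max)%:R) / P1 + (a.-1)%:R * C%:R) =
   ((p * u ord_max)%N%:R - (v ord_max)%:R + P1 * (a.-1)%:R * C%:R) / P1.
  field. by [].
rewrite ler_wpM2r //.
by rewrite invr_ge0 /P1 ler0n.
Qed.

End Comb.

Section Val.
Variables (K : fieldType) (p : nat) (ord : K -> rat).
Hypothesis hp : prime p.
Hypothesis hord : is_pval p ord.

Lemma ord1 : ord 1 = 0.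
Proof. have := pval_M hord (oner_neq0 K) (oner_neq0 K); rewrite mulr1 => h; lra. Qed.

Lemma ordN1 : ord (-1) = 0.
Proof.
have h1 : (-1 : K) != 0 by rewrite oppr_eq0 oner_neq0.
have := pval_M hord h1 h1; rewrite mulrNN mulr1 ord1 => h; lra.
Qed.

Lemma ord_ge_le [x r s] : s <= r -> ord_ge ord x r -> ord_ge ord x s.
Proof. by move=> hsr [->|h]; [left|right; apply: le_trans h]. Qed.

Lemma ord_geD [x y r] : ord_ge ord x r -> ord_ge ord y r -> ord_ge ord (x + y) r.
Proof.
move=> [->|hx]; first by rewrite add0r.
move=> [->|hy]; first by rewrite addr0; right.
have [hx0|hx0] := eqVneq x 0; first by rewrite hx0 add0r; right.
have [hy0|hy0] := eqVneq y 0; first by rewrite hy0 addr0; right.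
have [hs|hs] := eqVneq (x + y) 0; first by left.
right; apply: le_trans (pval_D hord hx0 hy0 hs).
by rewrite le_min hx hy.
Qed.

Lemma ord_geM [x y r s] : ord_ge ord x r -> ord_ge ord y s -> ord_ge ord (x * y) (r + s).
Proof.
move=> [->|hx]; first by rewrite mul0r; left.
move=> [->|hy]; first by rewrite mulr0; left.
have [hx0|hx0] := eqVneq x 0; first by rewrite hx0 mul0r; left.
have [hy0|hy0] := eqVneq y 0; first by rewrite hy0 mulr0; left.
by right; rewrite (pval_M hord hx0 hy0) lerD.
Qed.

Lemma ord_geN [x r] : ord_ge ord x r -> ord_ge ord (- x) r.
Proof.
move=> h; rewrite -mulN1r.
have h1 : ord_ge ord (-1 : K) 0 by right; rewrite ordN1.
by have := ord_geM h1 h; rewrite add0r.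
Qed.

Lemma ord_ge_sum (I : Type) (rs : seq I) (P : pred I) (F : I -> K) r :
  (forall i, P i -> ord_ge ord (F i) r) -> ord_ge ord (\sum_(i <- rs | P i) F i) r.
Proof. move=> h; apply: (big_ind (fun x => ord_ge ord x r)) => //; first by left. by move=> x y; apply: ord_geD. Qed.

Lemma ord_ge_prod (I : Type) (rs : seq I) (P : pred I) (F : I -> K) (G : I -> rat) :
  (forall i, P i -> ord_ge ord (F i) (G i)) ->
  ord_ge ord (\prod_(i <- rs | P i) F i) (\sum_(i <- rs | P i) G i).
Proof.
move=> h; apply: (big_ind2 (fun x r => ord_ge ord x r)) => //.
  by right; rewrite ord1.
by move=> x1 x2 y1 y2; apply: ord_geM.
Qed.

Lemma ord_ge_nat n : ord_ge ord (n%:R : K) 0.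
Proof.
elim: n => [|n IH]; first by left.
by rewrite -natr1; apply: ord_geD => //; right; rewrite ord1.
Qed.

Lemma ord_ge_int (z : int) : ord_ge ord (z%:~R : K) 0.
Proof.
case: z => n; first by rewrite -pmulrn; apply: ord_ge_nat.
by rewrite NegzE rmorphN /= -pmulrn; apply/ord_geN/ord_ge_nat.
Qed.

Lemma ord_ge_val [x r] : x != 0 -> ord_ge ord x r -> r <= ord x.
Proof. by move=> hx [h|h] //; move: hx; rewrite h eqxx. Qed.

Lemma ord_ge_one_contra r : 0 < r -> ord_ge ord 1 r -> False.
Proof.
move=> hr [h|h]; first by move: (oner_neq0 K); rewrite h eqxx.
by move: h; rewrite ord1; lra.
Qed.

Lemma ord_ndvd b : ~~ (p %| b)%N -> (b%:R : K) != 0 /\ ord b%:R = 0.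
Proof.
move=> hb.
have [x _ hx] := Bezoutl b (prime_gt0 hp).
have hc : coprime p b by rewrite prime_coprime.
rewrite (eqP hc) in hx; case/dvdnP: hx => k hk.
have eK : (1 + x%:R * b%:R : K) = k%:R * p%:R.
  by have := congr1 (fun n : nat => n%:R : K) hk; rewrite /= natrD !natrM mulr1n.
have hp1 : ord_ge ord (p%:R : K) 1 by right; rewrite (pval_p hord).
have hkp : ord_ge ord (k%:R * p%:R : K) 1.
  by have := ord_geM (ord_ge_nat k) hp1; rewrite add0r.
have hb0 : (b%:R : K) != 0.
  apply/negP => /eqP hb0; move: eK; rewrite hb0 mulr0 addr0 => eK.
  by apply: (@ord_ge_one_contra 1 ltr01); rewrite eK.
split => //.
have hge := ord_ge_val hb0 (ord_ge_nat b).
have [h0|hpos] := boolP (ord b%:R <= 0); first by apply/eqP; rewrite eq_le h0 hge.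
exfalso; rewrite -ltNge in hpos.
have e1 : (1 : K) = k%:R * p%:R - x%:R * b%:R by rewrite -eK addrK.
have hxb : ord_ge ord (x%:R * b%:R : K) (ord b%:R).
  by have := ord_geM (ord_ge_nat x) (or_intror (lexx (ord b%:R)) : ord_ge ord (b%:R : K) _); rewrite add0r.
have key : forall c, 0 < c -> c <= 1 -> c <= ord b%:R -> False.
  move=> c hc1 hc2 hc3; apply: (@ord_ge_one_contra c hc1); rewrite e1; apply: ord_geD.
    exact: ord_ge_le hc2 hkp.
  by apply: ord_geN; apply: ord_ge_le hc3 hxb.
case: (lerP (ord b%:R) 1) => h; first by apply: (key (ord b%:R)).
by apply: (key 1) => //; apply: ltW.
Qed.

Lemma ord_ge_ratr r : pint p r -> ord_ge ord (ratr r : K) 0.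
Proof.
move=> [a [b [hb er]]].
have [hb0 hbo] := ord_ndvd b hb.
have hbq : (b%:R : rat) != 0.
  by move: hb; case: (b) => [|b']; [rewrite dvdn0 | rewrite pnatr_eq0].
have hdq : ((denq r)%:~R : rat) != 0 by rewrite intr_eq0 denq_neq0.
have ecross : (numq r * b%:Z = a * denq r)%R.
  apply: (@intr_inj rat); rewrite !rmorphM /=.
  have := er; rewrite -{1}(divq_num_den r) => /eqP; rewrite eqr_div // ?(-pmulrn) //.
  by move=> /eqP; rewrite -pmulrn.
have eK := congr1 (fun z : int => (z%:~R : K)) ecross.
rewrite /= !rmorphM /= -pmulrn in eK.
rewrite /ratr.
have [hd|hd] := eqVneq ((denq r)%:~R : K) 0; first by rewrite hd invr0 mulr0; left.
have [hn|hn] := eqVneq ((numq r)%:~R : K) 0; first by rewrite hn mul0r; left.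
right.
have ha0 : (a%:~R : K) != 0.
  apply/negP => /eqP ha0; move: eK; rewrite ha0 mul0r => /eqP.
  by rewrite mulf_eq0 (negPf hn) (negPf hb0).
have := pval_M hord hn hb0; rewrite eK (pval_M hord ha0 hd) hbo addr0 => e.
have hinv : ord ((denq r)%:~R^-1 : K) = - ord ((denq r)%:~R : K).
  have := pval_M hord hd (invr_neq0 hd); rewrite mulfV // ord1 => h; lra.
rewrite (pval_M hord hn (invr_neq0 hd)) hinv.
have := ord_ge_val ha0 (ord_ge_int a); lra.
Qed.

End Val.

Lemma mcoeff_sumX (R : comNzRingType) nv (I : Type) (r : seq I) (P : pred I) (F : I -> {mpoly R[nv]}) w :
  (\sum_(i <- r | P i) F i)@_w = \sum_(i <- r | P i) (F i)@_w.
Proof. by apply: (big_morph (mcoeff w) (mcoeffD w)); rewrite mcoeff0. Qed.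

Lemma prod_scaleX (R : comNzRingType) nv (I : Type) (r : seq I) (c : I -> R) (e : I -> 'X_{1.. nv}) :
  \prod_(i <- r) (c i *: 'X_[e i] : {mpoly R[nv]}) = (\prod_(i <- r) c i) *: 'X_[(\sum_(i <- r) e i)%MM].
Proof.
elim: r => [|x r IH]; first by rewrite !big_nil mpolyX0 scale1r.
by rewrite !big_cons IH mpolyXD -scalerAl -scalerAr scalerA.
Qed.

Lemma mcoeff_prod_sum (R : comNzRingType) nv (I J : finType) (c : I -> J -> R)
   (e : I -> J -> 'X_{1.. nv}) (w : 'X_{1.. nv}) :
  (\prod_(i : I) \sum_(j : J) (c i j *: 'X_[e i j] : {mpoly R[nv]}))@_w =
  \sum_(f : {ffun I -> J}) (\prod_i c i (f i)) * (((\sum_i e i (f i))%MM == w)%:R).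
Proof.
rewrite bigA_distr_bigA mcoeff_sumX; apply: eq_bigr => f _.
by rewrite prod_scaleX mcoeffZ mcoeffX.
Qed.

Section Main.
Variables (K : fieldType) (p : nat) (ord : K -> rat).
Hypothesis hp : prime p.
Hypothesis hord : is_pval p ord.

Lemma ord_X x m : x != 0 -> ord (x ^+ m) = m%:R * ord x.
Proof.
move=> hx; elim: m => [|m IH]; first by rewrite expr0 mul0r (@ord1 _ _ _ hord).
by rewrite exprS (pval_M hord hx (expf_neq0 _ hx)) IH -natr1 mulrDl mul1r addrC.
Qed.

Lemma ord_geX0 x m : ord_ge ord x 0 -> ord_ge ord (x ^+ m) 0.
Proof.
move=> hx; elim: m => [|m IH]; first by right; rewrite expr0 (@ord1 _ _ _ hord).
by rewrite exprS; have := ord_geM _ _ _ hord hx IH; rewrite addr0.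
Qed.

Lemma ord_ge_term (g y : K) m k : g != 0 -> ord g = ((p.-1)%:R)^-1 -> ord_ge ord y 0 ->
  ord_ge ord (theta_coef p g m * y ^+ k) (m%:R / (p.-1)%:R).
Proof.
move=> hg0 hg hy.
have h1 := @ord_ge_ratr K p ord hp hord _ (AHcoef_pint p hp m).
have h2 : ord_ge ord (g ^+ m) (m%:R / (p.-1)%:R) by right; rewrite ord_X // hg.
have h3 := ord_geX0 y k hy.
have := ord_geM _ _ _ hord (ord_geM _ _ _ hord h1 h2) h3.
by rewrite add0r addr0.
Qed.

End Main.

Theorem corollary3p26
  (p a n d N : nat) (hp : prime p) (ha : (1 <= a)%N) (hn : (1 <= n)%N)
  (hd : (2 <= d)%N)
  (A : 'I_N -> 'I_n.+1 -> nat)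
  (hA : forall j, (\sum_(i < n.+1) A j i)%N = d)
  (K : fieldType) (ord : K -> rat) (hord : is_pval p ord)
  (gamma0 : K) (hg0 : is_zero_of_AHlog ord p gamma0)
  (hg0ord : gamma0 != 0 /\ ord gamma0 = ((p.-1)%:R)^-1)
  (F : finFieldType) (hF : #|F| = (p ^ a)%N)
  (red : K -> F) (tl : F -> K) (htl : is_teichmuller ord red tl)
  (lam : 'I_N -> F)
  (I : {set 'I_n.+1}) (u v : 'I_n.+2 -> nat)
  (hu : inU d I u) (hv : inU d I v) :
  ord_ge ord
    (theta0_coef p a gamma0 A (fun j => tl (lam j))
       (fun k => ((p ^ a * u k)%N)%:Z - (v k)%:Z))
    ((((p * u ord_max)%N)%:~R - (v ord_max)%:~R) / (p.-1)%:R
       + (a.-1)%:R * (muI d I + 1)%:~R).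
Proof.
have hd0 : (0 < d)%N by apply: leq_trans hd.
rewrite /theta0_coef /=.
case: ifP => hw; last by left.
have hvu : forall k, (v k <= p ^ a * u k)%N.
  by move=> k; move/forallP: hw => /(_ k); rewrite subr_ge0 lez_nat.
have habs : forall k, `|((p ^ a * u k)%N)%:Z - (v k)%:Z|%N = (p ^ a * u k - v k)%N.
  by move=> k; rewrite subzn // absz_nat.
rewrite habs.
have -> : [multinom `|((p ^ a * u k)%N)%:Z - (v k)%:Z|%N | k < n.+2] =
          [multinom (p ^ a * u k - v k)%N | k < n.+2].
  by apply/mnmP => k; rewrite !mnmE habs.
set D := (p ^ a * u ord_max - v ord_max)%N.
rewrite /theta0_trunc pair_bigA mcoeff_prod_sum.
apply: (ord_ge_sum _ _ _ hord) => f _.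
case: eqP => he; last by rewrite mulr0; left.
rewrite mulr1.
pose i0 : 'I_a := Ordinal ha.
pose mm := fun (i : nat) (j : 'I_N) => (f (insubd i0 i, j) : nat).
have hpair : forall G : 'I_a -> 'I_N -> nat,
    (\sum_(ij : 'I_a * 'I_N) G ij.1 ij.2)%N = (\sum_(0 <= i < a) \sum_(j < N) (fun i j => G (insubd i0 i) j) i j)%N.
  move=> G; rewrite -(pair_bigA _ G) big_mkord; apply: eq_bigr => i _.
  by rewrite /= valKd.
have heq : forall k : 'I_n.+2,
    (\sum_(0 <= i < a) \sum_(j < N) p ^ i * mm i j * aplus A j k)%N = (p ^ a * u k - v k)%N.
  move=> k; have := congr1 (fun mon : 'X_{1.. n.+2} => mon k) he.
  rewrite /= mnm_sumE mnmE => <-.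
  pose G := fun (i : 'I_a) (j : 'I_N) => (p ^ i * f (i, j) * aplus A j k)%N.
  rewrite [RHS](_ : _ = (\sum_(ij : 'I_a * 'I_N) G ij.1 ij.2)%N); last first.
    by apply: eq_bigr => [[i j]] _; rewrite mnmE.
  rewrite hpair /G.
  apply: eq_big_nat => i hi; apply: eq_bigr => j _; rewrite /mm /=.
  congr (_ ^ _ * _ * _)%N.
  by rewrite insubdK // inE; case/andP: hi.
have hc := @comb_final p a n d N hp ha hd0 A hA I u v hv mm heq hvu.
apply: (ord_ge_le _ _ _ (@ord_ge_prod _ _ _ hord _ _ _ _ (fun ij : 'I_a * 'I_N => (f ij : nat)%:R / (p.-1)%:R) _)).
  apply: (le_trans hc).
  pose G := fun (i : 'I_a) (j : 'I_N) => (f (i, j) : nat).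
  rewrite -mulr_suml -natr_sum (_ : (\sum_i (f i : nat))%N = (\sum_(ij : 'I_a * 'I_N) G ij.1 ij.2)%N); last first.
    by apply: eq_bigr => [[i j]] _.
  rewrite hpair /G.
  by [].
move=> ij _; apply: (@ord_ge_term K p ord hp hord) => //; [exact: hg0ord.1 | exact: hg0ord.2 | exact: (tl_integral htl)].
Qed.
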